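(* Let $G$ be an undirected graph with double cover $H$. For any nonempty simple set $S\subset V_H$, let $L=\{u:u_1\in S\}$ and $R=\{u:u_2\in S\}$. Then $\beta_G(L,R)=\Phi_H(S)$.
   Context: $G$ is unweighted; $\mathrm{vol}(S)=\sum_{v\in S}\deg(v)$; $e(A,B)$ is the number of edges between disjoint $A,B$. $\beta_G(L,R)=1-\frac{2e(L,R)}{\mathrm{vol}(L\cup R)}$. Conductance: $\Phi_H(S)=\frac{|\partial S|}{\min\{\mathrm{vol}(S),\mathrm{vol}(V_H\setminus S)\}}$. The double cover $H$ has vertices $v_1,v_2$ for each $v\in V_G$ and edges $\{u_1,v_2\},\{u_2,v_1\}$ for each $\{u,v\}\in E_G$. A set $S\subset V_H$ is simple if $|\{v_1,v_2\}\cap S|\le1$ for all $v\in V_G$. *)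

(* Defs.v *)
From HB Require Import structures.
From mathcomp Require Import all_boot all_order all_algebra.
Set Implicit Arguments. Unset Strict Implicit. Unset Printing Implicit Defensive.
Import Order.TTheory GRing.Theory Num.Theory.

(* An unweighted undirected graph on a finite vertex type T is a symmetric,
   irreflexive boolean relation g. *)
Section GraphDefs.
Variables (T : finType) (g : rel T).

Definition deg (v : T) : nat := #|[set w | g v w]|.

Definition vol (S : {set T}) : nat := \sum_(v in S) deg v.

(* e(A,B): number of edges between A and B (for disjoint A, B each edge
   {a,b} with a in A, b in B is counted once as the ordered pair (a,b)) *)
Definition ecount (A B : {set T}) : nat :=
  #|[set p : T * T | [&& p.1 \in A, p.2 \in B & g p.1 p.2]]|.

Definition beta (L R : {set T}) : rat :=
  1 - 2%:R * (ecount L R)%:R / (vol (L :|: R))%:R.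

Definition conductance (S : {set T}) : rat :=
  (ecount S (~: S))%:R / (minn (vol S) (vol (~: S)))%:R.

End GraphDefs.

(* Double cover: vertex (v,false) is v_1, (v,true) is v_2;
   edges {u_1,v_2}, {u_2,v_1} for each edge {u,v} of G. *)
Definition dcover (T : finType) (g : rel T) : rel (T * bool) :=
  fun x y => g x.1 y.1 && (x.2 != y.2).

Definition simple_set (T : finType) (S : {set T * bool}) : Prop :=
  forall v : T, ~~ (((v, false) \in S) && ((v, true) \in S)).

(* Main.v *)
Require Import Defs.
From HB Require Import structures.
From mathcomp Require Import all_boot all_order all_algebra.
From mathcomp Require Import ring.
Set Implicit Arguments. Unset Strict Implicit. Unset Printing Implicit Defensive.
Import Order.TTheory GRing.Theory Num.Theory.

Section H.
Variables (T : finType) (g : rel T).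

Lemma cardsum (U : finType) (P : pred U) : #|[set y | P y]| = \sum_y (P y : nat).
Proof.
rewrite -sum1_card big_mkcond /=; apply: eq_bigr => y _; rewrite inE; by case: (P y).
Qed.

Lemma sumTb (F : T * bool -> nat) : \sum_x F x = \sum_u (F (u, false) + F (u, true)).
Proof.
transitivity (\sum_u \sum_b F (u, b)); last first.
  by apply: eq_bigr => u _; rewrite big_bool addnC.
rewrite pair_big /=; apply: eq_bigr => -[u b] _ //.
Qed.

Lemma degE (v : T) : deg g v = \sum_w (g v w : nat).
Proof. by rewrite /deg cardsum. Qed.

Lemma degH (x : T * bool) : deg (dcover g) x = deg g x.1.
Proof.
case: x => u b; rewrite degE /deg cardsum sumTb; apply: eq_bigr => w _.
by rewrite /dcover /=; case: b; case: (g u w).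
Qed.

Lemma volH (A : {set T * bool}) :
  vol (dcover g) A = \sum_u ((((u, false) \in A) : nat) + ((u, true) \in A)) * deg g u.
Proof.
rewrite /vol big_mkcond /= sumTb; apply: eq_bigr => u _.
rewrite mulnDl; case: ((u, false) \in A); case: ((u, true) \in A); by rewrite ?degH ?mul1n ?mul0n.
Qed.

Lemma volE (A : {set T}) : vol g A = \sum_u ((u \in A) : nat) * deg g u.
Proof.
by rewrite /vol big_mkcond /=; apply: eq_bigr => u _; case: (u \in A); rewrite ?mul1n ?mul0n.
Qed.

Lemma ecountE (A B : {set T}) :
  ecount g A B = \sum_u \sum_w (((u \in A) && (w \in B) && g u w) : nat).
Proof.
rewrite /ecount cardsum pair_big /=; apply: eq_bigr => -[u w] _ /=; by rewrite andbA.
Qed.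

Lemma ecountHE (A B : {set T * bool}) :
  ecount (dcover g) A B = \sum_x \sum_y (((x \in A) && (y \in B) && dcover g x y) : nat).
Proof.
rewrite /ecount cardsum pair_big /=; apply: eq_bigr => -[u w] _ /=; by rewrite andbA.
Qed.

End H.

Theorem lemma2 (T : finType) (g : rel T)
  (g_sym : symmetric g) (g_irr : irreflexive g)
  (S : {set T * bool}) (S_ne : S != set0) (S_simple : simple_set S)
  (S_vol : (0 < vol (dcover g) S)%N) :
  let L := [set u | (u, false) \in S] in
  let R := [set u | (u, true) \in S] in
  beta g L R = conductance (dcover g) S.
Proof.
move=> L R.
set V := vol g (L :|: R); set e := ecount g L R.
have h1 : vol (dcover g) S = V.
  rewrite volH /V volE; apply: eq_bigr => u _.
  rewrite in_setU !inE; move: (S_simple u).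
  by case: ((u, false) \in S); case: ((u, true) \in S).
have h2 : vol (dcover g) S <= vol (dcover g) (~: S).
  rewrite !volH; apply: leq_sum => u _; apply: leq_mul => //.
  rewrite !in_setC; move: (S_simple u).
  by case: ((u, false) \in S); case: ((u, true) \in S).
have hsplit : ecount (dcover g) S (~: S) +
   \sum_x \sum_y (((x \in S) && (y \in S) && dcover g x y) : nat) = V.
  rewrite ecountHE -big_split -h1 /= /vol [RHS]big_mkcond /=.
  apply: eq_bigr => x _; rewrite -big_split /= degE; case: (x \in S) => /=.
    apply: eq_bigr => y _; rewrite in_setC.
    by case: (y \in S); case: (dcover g x y).
  by rewrite big1.
have hSS : \sum_x \sum_y (((x \in S) && (y \in S) && dcover g x y) : nat) = 2 * e.
  rewrite mul2n -addnn {2}/e ecountE (exchange_big _ _ (index_enum T)) /e ecountE.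
  rewrite -big_split sumTb /=; apply: eq_bigr => u _.
  rewrite !sumTb -!big_split /=; apply: eq_bigr => w _.
  rewrite /dcover /= !inE (g_sym w u).
  by case: ((u, false) \in S); case: ((u, true) \in S);
     case: ((w, false) \in S); case: ((w, true) \in S); case: (g u w).
have hle : 2 * e <= V by rewrite -hSS -hsplit leq_addl.
have hec : ecount (dcover g) S (~: S) = V - 2 * e by rewrite -hsplit hSS addnK.
rewrite /conductance (minn_idPl h2) h1 hec /beta -/V -/e natrB // natrM.
have hV : (V%:R != 0 :> rat)%R by rewrite pnatr_eq0 -lt0n -h1.
by field.
Qed.
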